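(* For all $y,k\in\mathbb N_0$: \begin{enumerate} \item $y+2k+\{3,4,6,7\}+4\cdot[0,k]\in\mathcal L(C_2^5)$; \item $y+2k+\{4,5,6,8,9\}+4\cdot[0,k]\in\mathcal L(C_2^5)$. \end{enumerate}
   Context: $C_2^r$ denotes an elementary abelian $2$-group of rank $r$; $[a,b]=\{x\in\mathbb Z:a\le x\le b\}$. For $L,L'\subset\mathbb Z$ and $y,k\in\mathbb Z$: $L+L'=\{a+b:a\in L,b\in L'\}$, $y+L=\{y\}+L$, and $k\cdot L=\{ka:a\in L\}$ (so $4\cdot[0,k]=\{0,4,\dots,4k\}$). For a subset $G_0$ of a finite abelian group $G$, a sequence over $G_0$ is an element of the free abelian monoid $\mathcal F(G_0)$ with basis $G_0$ (a finite unordered list of elements of $G_0$, repetitions allowed). $\mathcal B(G_0)$ is the monoid of zero-sum sequences over $G_0$ (including the empty sequence). An atom is a minimal zero-sum sequence, i.e. a nonempty zero-sum sequence that is not a product of two nonempty zero-sum sequences. For $B\in\mathcal B(G_0)$, $\mathsf L(B)=\{k\in\mathbb N_0: B \text{ is a product of } k \text{ atoms}\}$, and $\mathcal L(G_0)=\{\mathsf L(B):B\in\mathcal B(G_0)\}$; $\mathcal L(G)$ is the case $G_0=G$. *)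

(* Defs.v *)
From mathcomp Require Import all_boot all_algebra.
Set Implicit Arguments. Unset Strict Implicit. Unset Printing Implicit Defensive.
Import GRing.Theory.
Local Open Scope ring_scope.

Definition C2 (r : nat) := 'rV['F_2]_r.

Section Monoid.
Variable G : zmodType.

(* Sequences over G are finite lists, considered up to permutation
   (perm_eq); a sequence is zero-sum if its elements sum to 0. *)
Definition zero_sum (s : seq G) : Prop := \sum_(g <- s) g = 0.

Definition atom (s : seq G) : Prop :=
  s <> [::] /\ zero_sum s /\
  ~ (exists S T : seq G, S <> [::] /\ T <> [::] /\ zero_sum S /\ zero_sum T
                         /\ perm_eq s (S ++ T)).

Definition lengths (B : seq G) (k : nat) : Prop :=
  exists F : seq (seq G),
    size F = k /\ (forall A, A \in F -> atom A) /\ perm_eq B (flatten F).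

Definition in_system_of_sets (L : nat -> Prop) : Prop :=
  exists B : seq G, zero_sum B /\ forall n, L n <-> lengths B n.
End Monoid.

Definition shifted_set (y k : nat) (A : seq nat) (n : nat) : Prop :=
  exists a i, a \in A /\ (i <= k)%N /\ n = (y + 2 * k + a + 4 * i)%N.

(* Main.v *)
Require Import Defs.
From mathcomp Require Import all_boot all_algebra.
From mathcomp Require Import zify.
Set Implicit Arguments. Unset Strict Implicit. Unset Printing Implicit Defensive.
Import GRing.Theory.
Local Open Scope ring_scope.

Definition vec5 (a0 a1 a2 a3 a4 : bool) : C2 5 :=
  (\row_(j < 5) ((nth false [:: a0; a1; a2; a3; a4] j)%:R : 'F_2))%R.
Arguments vec5 : simpl never.

Lemma F2_inj (a b : bool) : ((a%:R : 'F_2) == b%:R) = (a == b).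
Proof. by case: a; case: b; rewrite //= ?oner_eq0 // eq_sym oner_eq0. Qed.

Lemma F2_add (a b : bool) : (a%:R + b%:R : 'F_2) = (a (+) b)%:R.
Proof. by case: a; case: b; rewrite /= ?addr0 ?add0r //; apply/eqP. Qed.

Lemma vec5_eq a0 a1 a2 a3 a4 b0 b1 b2 b3 b4 :
  (vec5 a0 a1 a2 a3 a4 == vec5 b0 b1 b2 b3 b4) =
  [&& a0 == b0, a1 == b1, a2 == b2, a3 == b3 & a4 == b4].
Proof.
apply/eqP/idP.
  move/matrixP=> H.
  have h := fun j => H ord0 j; rewrite /vec5 in h.
  have := h (@Ordinal 5 0 isT); have := h (@Ordinal 5 1 isT);
  have := h (@Ordinal 5 2 isT); have := h (@Ordinal 5 3 isT);
  have := h (@Ordinal 5 4 isT); rewrite !mxE /=.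
  move=> /eqP h4 /eqP h3 /eqP h2 /eqP h1 /eqP h0.
  by rewrite -!F2_inj h0 h1 h2 h3 h4.
by case/and5P=> /eqP-> /eqP-> /eqP-> /eqP-> /eqP->.
Qed.

Lemma vec5D a0 a1 a2 a3 a4 b0 b1 b2 b3 b4 :
  vec5 a0 a1 a2 a3 a4 + vec5 b0 b1 b2 b3 b4 =
  vec5 (a0 (+) b0) (a1 (+) b1) (a2 (+) b2) (a3 (+) b3) (a4 (+) b4).
Proof.
apply/matrixP=> i j; rewrite /vec5 !mxE F2_add.
by case: j => [[|[|[|[|[|]]]]] ?].
Qed.

Lemma vec50 : vec5 false false false false false = 0.
Proof. by apply/matrixP=> i j; rewrite /vec5 !mxE; case: j => [[|[|[|[|[|]]]]] ?]. Qed.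

Lemma vec5_eq0 a0 a1 a2 a3 a4 : vec5 a0 a1 a2 a3 a4 = 0 ->
  [&& ~~ a0, ~~ a1, ~~ a2, ~~ a3 & ~~ a4].
Proof.
rewrite -vec50 => /eqP; rewrite vec5_eq.
by case: a0; case: a1; case: a2; case: a3; case: a4.
Qed.

Lemma addxx (x : C2 5) : x + x = 0.
Proof.
apply/matrixP=> i j; rewrite !mxE.
by case: (x i j) => [[|[|//]] ?]; apply/eqP.
Qed.
Definition z := vec5 false false false false false.
Definition e0 := vec5 true true true true true.
Definition e1 := vec5 true false false false false.
Definition e2 := vec5 false true false false false.
Definition e3 := vec5 false false true false false.
Definition e4 := vec5 false false false true false.
Definition e5 := vec5 false false false false true.
Definition f := vec5 true true false false false.
Definition P7 := [:: e0; e1; e2; e3; e4; e5; f].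
Definition P8 := z :: P7.
Definition Ua := [:: e0; e1; e2; e3; e4; e5].
Definition Aa := [:: e1; e2; f].
Definition Ca := [:: e0; e3; e4; e5; f].

Lemma z0 : z = 0. Proof. exact: vec50. Qed.

Lemma mask_zs b0 b1 b2 b3 b4 b5 b6 :
  zero_sum (mask [:: b0; b1; b2; b3; b4; b5; b6] P7) ->
  let l := mask [:: b0; b1; b2; b3; b4; b5; b6] P7 in
  l = [::] \/ l = Ua \/ l = Aa \/ l = Ca.
Proof.
rewrite /zero_sum /P7.
case: b0; case: b1; case: b2; case: b3; case: b4; case: b5; case: b6;
 rewrite /= ?big_cons ?big_nil ?addr0 /Ua /Aa /Ca /e0 /e1 /e2 /e3 /e4 /e5 /f ?vec5D /=;
 try (move/vec5_eq0; done);
 by [left | right; left | right; right; left | right; right; right].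
Qed.

Section Gen.
Variable G : zmodType.

Lemma sum_cat (S T : seq G) : \sum_(g <- S ++ T) g = \sum_(g <- S) g + \sum_(g <- T) g.
Proof. by rewrite big_cat. Qed.

Lemma zs_perm (s t : seq G) : perm_eq s t -> zero_sum s -> zero_sum t.
Proof. by move=> hp; rewrite /zero_sum (perm_big t hp). Qed.

Lemma atom_split (s S T : seq G) : atom s -> perm_eq s (S ++ T) -> zero_sum S ->
  S = [::] \/ T = [::].
Proof.
case=> _ [zs nsp] hp zS.
have zT : zero_sum T.
  move: zs; rewrite /zero_sum (perm_big (S ++ T) hp) sum_cat.
  by move: zS; rewrite /zero_sum => ->; rewrite add0r.
case: S hp zS => [|a S]; first by left.
case: T zT => [|b T]; first by right.
move=> zT hp zS; exfalso; apply: nsp.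
by exists (a :: S), (b :: T).
Qed.
End Gen.

Lemma dup (T : eqType) (s : seq T) : ~~ uniq s -> exists g, g \in s /\ g \in rem g s.
Proof.
elim: s => [|x s IH] //=.
case: (boolP (x \in s)) => xs /=.
  by move=> _; exists x; rewrite eqxx inE eqxx.
move/IH=> [g [gs gr]]; exists g; rewrite inE gs orbT; split=> //.
by case: eqP => _ //; rewrite inE gr orbT.
Qed.

Lemma uniqP7 : uniq P7.
Proof. by rewrite /P7 /= !inE /e0 /e1 /e2 /e3 /e4 /e5 /f !vec5_eq. Qed.

Lemma zP7 : z \notin P7.
Proof. by rewrite /P7 !inE /z /e0 /e1 /e2 /e3 /e4 /e5 /f !vec5_eq. Qed.

Lemma zs_uniq (s : seq (C2 5)) : uniq s -> {subset s <= P7} -> zero_sum s ->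
  s = [::] \/ perm_eq s Ua \/ perm_eq s Aa \/ perm_eq s Ca.
Proof.
move=> us sP zs.
have hp : perm_eq s [seq x <- P7 | x \in s].
  apply: uniq_perm => //; first by rewrite filter_uniq // uniqP7.
  by move=> x; rewrite mem_filter; case: (boolP (x \in s)) => // /sP ->.
rewrite filter_mask in hp.
have := mask_zs (zs_perm hp zs).
move: hp; rewrite /= => hp [e|[e|[e|e]]]; rewrite e in hp.
- by left; apply: size0nil; rewrite (perm_size hp).
- by right; left.
- by right; right; left.
- by right; right; right.
Qed.

Lemma atom_class (s : seq (C2 5)) : atom s -> {subset s <= P8} ->
  perm_eq s [:: z] \/ (exists2 g, g \in P7 & perm_eq s [:: g; g]) \/
  perm_eq s Ua \/ perm_eq s Aa \/ perm_eq s Ca.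
Proof.
move=> At sP.
case: (boolP (z \in s)) => zs.
  left; have hp := perm_to_rem zs.
  have zz : zero_sum [:: z] by rewrite /zero_sum big_seq1 z0.
  case: (atom_split (S := [:: z]) (T := rem z s) At hp zz) => // e.
  by rewrite e in hp.
have sP7 : {subset s <= P7}.
  move=> x xs; move: (sP x xs); rewrite /P8 inE; case/orP=> // /eqP ex.
  by move: zs; rewrite -ex xs.
case: (boolP (uniq s)) => us.
  case: At => ne [zsum _].
  case: (zs_uniq us sP7 zsum) => [//|H]; by right; right.
right; left.
have [g [gs gr]] := dup us.
exists g; first exact: sP7.
have hp : perm_eq s ([:: g; g] ++ rem g (rem g s)).
  apply: perm_trans (perm_to_rem gs) _; rewrite /= perm_cons.
  exact: perm_to_rem.
have zz : zero_sum [:: g; g] by rewrite /zero_sum !big_cons big_nil addr0 addxx.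
case: (atom_split At hp zz) => // e.
by rewrite e cats0 in hp.
Qed.

Local Close Scope ring_scope.

Ltac letters := rewrite /Ua /Aa /Ca /z /e0 /e1 /e2 /e3 /e4 /e5 /f /= ?inE ?vec5_eq /=.

Lemma atom_facts (A : seq (C2 5)) : atom A -> {subset A <= P8} ->
  size A + count_mem z A = 2 + 4 * (size A == 6) + (size A == 3) + 3 * (size A == 5) /\
  (exists m, count_mem e0 A = (size A == 6) + (size A == 5) + 2 * m) /\
  (exists m, count_mem e1 A = (size A == 6) + (size A == 3) + 2 * m) /\
  (exists m, count_mem f A = (size A == 3) + (size A == 5) + 2 * m).
Proof.
move=> At sP.
case: (atom_class At sP) => [hp|[[g gP hp]|[hp|[hp|hp]]]];
  rewrite (perm_size hp); move/permP: hp => hp; rewrite !hp.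
- by letters; split=> //; split; [|split]; exists 0.
- have gz : (g == z) = false.
    by apply/negbTE; apply: contraNneq zP7 => <-.
  rewrite /= gz; split=> //.
  by split; [|split]; [exists (g == e0) | exists (g == e1) | exists (g == f)];
    case: (_ == _).
- by letters; split=> //; split; [|split]; exists 0.
- by letters; split=> //; split; [|split]; exists 0.
- by letters; split=> //; split; [|split]; exists 0.
Qed.

Lemma sum_lin (T : eqType) (F : seq T) (p q r s : T -> nat) :
  (forall A, A \in F -> p A = 2 + 4 * q A + r A + 3 * s A) ->
  sumn (map p F) = 2 * size F + 4 * sumn (map q F) + sumn (map r F) + 3 * sumn (map s F).
Proof.
elim: F => [|A F IH] H //=.
rewrite H ?inE ?eqxx // IH; first lia.
by move=> B BF; apply: H; rewrite inE BF orbT.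
Qed.

Lemma sum_par (T : eqType) (F : seq T) (p q r : T -> nat) :
  (forall A, A \in F -> exists m, p A = q A + r A + 2 * m) ->
  exists M, sumn (map p F) = sumn (map q F) + sumn (map r F) + 2 * M.
Proof.
elim: F => [|A F IH] H /=; first by exists 0.
have [m hm] := H A (mem_head _ _).
have [M hM] : exists M, sumn (map p F) = sumn (map q F) + sumn (map r F) + 2 * M.
  by apply: IH => B BF; apply: H; rewrite inE BF orbT.
exists (m + M); rewrite hm hM; lia.
Qed.

Lemma analyze (B : seq (C2 5)) n : lengths B n -> {subset B <= P8} ->
  exists u a c m0 m1 mf,
    2 * n + 4 * u + a + 3 * c = size B + count_mem z B /\
    count_mem e0 B = u + c + 2 * m0 /\
    count_mem e1 B = u + a + 2 * m1 /\
    count_mem f B = a + c + 2 * mf.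
Proof.
move=> [F [<- [HA hp]]] BP.
have sub : forall A, A \in F -> {subset A <= P8}.
  move=> A AF x xA; apply: BP; rewrite (perm_mem hp).
  by apply/flattenP; exists A.
have fa : forall A, A \in F -> _ := fun A AF => atom_facts (HA A AF) (sub A AF).
set q := fun A : seq (C2 5) => nat_of_bool (size A == 6).
set r := fun A : seq (C2 5) => nat_of_bool (size A == 3).
set s := fun A : seq (C2 5) => nat_of_bool (size A == 5).
have h1 := @sum_lin _ F (fun A => size A + count_mem z A) q r s
  (fun A AF => (fa A AF).1).
have [M0 h2] := @sum_par _ F (fun A => count_mem e0 A) q s
  (fun A AF => (fa A AF).2.1).
have [M1 h3] := @sum_par _ F (fun A => count_mem e1 A) q r
  (fun A AF => (fa A AF).2.2.1).
have [Mf h4] := @sum_par _ F (fun A => count_mem f A) r s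
  (fun A AF => (fa A AF).2.2.2).
exists (sumn (map q F)), (sumn (map r F)), (sumn (map s F)), M0, M1, Mf.
rewrite (perm_size hp) !(permP hp) size_flatten !count_flatten.
have -> : sumn (shape F) + sumn [seq count (pred1 z) x | x <- F] =
  sumn [seq size A + count (pred1 z) A | A <- F].
  by elim: (F) => //= A F' IH; lia.
by rewrite h1 h2 h3 h4; do !split.
Qed.

Lemma P8_ind (P : C2 5 -> Prop) : P z -> P e0 -> P e1 -> P e2 -> P e3 -> P e4 ->
  P e5 -> P f -> forall x, x \in P8 -> P x.
Proof.
move=> H0 H1 H2 H3 H4 H5 H6 H7 x; rewrite /P8 /P7 !inE.
by case/orP=> [/eqP->//|]; case/orP=> [/eqP->//|]; case/orP=> [/eqP->//|];
  case/orP=> [/eqP->//|]; case/orP=> [/eqP->//|]; case/orP=> [/eqP->//|];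
  case/orP=> [/eqP->//|] /eqP->.
Qed.

Lemma perm_counts (s t : seq (C2 5)) : {subset s <= P8} -> {subset t <= P8} ->
  (forall x, x \in P8 -> count_mem x s = count_mem x t) -> perm_eq s t.
Proof.
move=> sP tP H; rewrite /perm_eq; apply/allP => x; rewrite mem_cat => /orP[xs|xt] /=;
 apply/eqP; apply: H; [exact: sP | exact: tP].
Qed.

Lemma count_fnseq (T : Type) (p : pred T) n (t : seq T) :
  count p (flatten (nseq n t)) = n * count p t.
Proof. by elim: n => //= n IH; rewrite count_cat IH mulSn. Qed.

Lemma shape_info (X : seq (C2 5)) :
  perm_eq X Ua \/ perm_eq X Aa \/ perm_eq X Ca ->
  (size X = 6 /\ count_mem f X = 0) \/ (size X = 3 /\ count_mem f X = 1) \/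
  (size X = 5 /\ count_mem f X = 1).
Proof.
case=> [hp|[hp|hp]]; rewrite (perm_size hp); move/permP: hp => hp; rewrite hp; letters; tauto.
Qed.

Lemma atom_t (t : seq (C2 5)) : t \in [:: Ua; Aa; Ca] -> atom t.
Proof.
move=> tin.
have [ut tP zt sz ct] : [/\ uniq t, {subset t <= P7}, zero_sum t,
   size t \in [:: 6; 3; 5] & (size t == 6) = (count_mem f t == 0)].
  move: tin; rewrite !inE => /orP[/eqP->|/orP[/eqP->|/eqP->//]].
  - split.
    + by letters.
    + by apply/allP; rewrite /= /P7 !inE !eqxx ?orbT.
    + by rewrite /zero_sum /Ua !big_cons big_nil ?addr0; letters; rewrite !vec5D /= vec50.
    + by [].
    + by letters.
  - split.
    + by letters.
    + by apply/allP; rewrite /= /P7 !inE !eqxx ?orbT.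
    + by rewrite /zero_sum /Aa !big_cons big_nil ?addr0; letters; rewrite !vec5D /= vec50.
    + by [].
    + by letters.
  - split.
    + by letters.
    + by apply/allP; rewrite /= /P7 !inE !eqxx ?orbT.
    + by rewrite /zero_sum /Ca !big_cons big_nil ?addr0; letters; rewrite !vec5D /= vec50.
    + by [].
    + by letters.
split; first by move=> e; move: sz; rewrite e.
split=> //.
move=> [S [T [nS [nT [zS [zT hp]]]]]].
have uST : uniq (S ++ T) by rewrite -(perm_uniq hp).
move: (uST); rewrite cat_uniq => /and3P[uS _ uT].
have SP : {subset S <= P7}.
  by move=> x xS; apply: tP; rewrite (perm_mem hp) mem_cat xS.
have TP : {subset T <= P7}.
  by move=> x xT; apply: tP; rewrite (perm_mem hp) mem_cat xT orbT.
case: (zs_uniq uS SP zS) => // /shape_info hS.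
case: (zs_uniq uT TP zT) => // /shape_info hT.
have e1' := perm_size hp; rewrite size_cat in e1'.
move/permP: hp => hp; have e2' := hp (pred1 f); rewrite count_cat in e2'.
move: sz ct; rewrite !inE e1' e2'.
case: hS => [[-> ->]|[[-> ->]|[-> ->]]]; case: hT => [[-> ->]|[[-> ->]|[-> ->]]] //.
Qed.

Lemma atom_z : atom [:: z].
Proof.
split=> //; split; first by rewrite /zero_sum big_seq1 z0.
move=> [S [T [nS [nT [_ [_ hp]]]]]].
have hs := perm_size hp; move: hs nS nT; clear hp; rewrite size_cat.
by case: S => [|? ?] //; case: T => [|? ?] //=; rewrite addnS.
Qed.

Lemma atom_sq g : g \in P7 -> atom [:: g; g].
Proof.
move=> gP.
split=> //; split; first by rewrite /zero_sum !big_cons big_nil addr0 addxx.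
move=> [S [T [nS [nT [zS [_ hp]]]]]].
have hs := perm_size hp; move: hs nS zS hp; rewrite size_cat.
case: S => [|x [|x' S]] //; last first.
  by case: T nT => [|? ?] //= _; rewrite !addnS.
move=> _ _ zS hp.
have : x \in [:: g; g] by rewrite (perm_mem hp) inE eqxx.
rewrite !inE orbb => /eqP ex.
move: zS; rewrite /zero_sum big_seq1 ex => g0.
by move: zP7; rewrite z0 -g0 gP.
Qed.

Definition Tlist : seq (seq (C2 5)) := [:: [:: z]; Ua; Aa; Ca; [:: e0; e0]; [:: e1; e1];
  [:: e2; e2]; [:: e3; e3]; [:: e4; e4]; [:: e5; e5]; [:: f; f]].

Ltac inP8 := rewrite /P8 /P7 /Ua /Aa /Ca !inE !eqxx ?orbT.

Lemma Tlist_ok A : A \in Tlist -> atom A /\ {subset A <= P8}.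
Proof.
have hsq : forall g, g \in P7 -> atom [:: g; g] /\ {subset [:: g; g] <= P8}.
  move=> g gP; split; first exact: atom_sq.
  by move=> x; rewrite !inE orbb => /eqP->; move: gP; rewrite /P7 !inE => ->; rewrite orbT.
rewrite /Tlist !inE.
case/orP=> [/eqP->|]; first by split; [exact: atom_z | apply/allP; rewrite /=; inP8].
case/orP=> [/eqP->|].
  by split; [apply: atom_t; rewrite !inE eqxx | apply/allP; rewrite /= ; inP8].
case/orP=> [/eqP->|].
  by split; [apply: atom_t; rewrite !inE eqxx ?orbT | apply/allP; rewrite /= ; inP8].
case/orP=> [/eqP->|].
  by split; [apply: atom_t; rewrite !inE eqxx ?orbT | apply/allP; rewrite /= ; inP8].
by do 6!(case/orP=> [/eqP->|]; first by apply: hsq; rewrite /P7 !inE eqxx ?orbT);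
  move/eqP->; apply: hsq; rewrite /P7 !inE eqxx ?orbT.
Qed.

Lemma build (B : seq (C2 5)) y u a c m0 m1 m2 m3 m4 m5 mf n :
  {subset B <= P8} ->
  count_mem z B = y -> count_mem e0 B = u + c + 2 * m0 ->
  count_mem e1 B = u + a + 2 * m1 -> count_mem e2 B = u + a + 2 * m2 ->
  count_mem e3 B = u + c + 2 * m3 -> count_mem e4 B = u + c + 2 * m4 ->
  count_mem e5 B = u + c + 2 * m5 -> count_mem f B = a + c + 2 * mf ->
  n = y + u + a + c + m0 + m1 + m2 + m3 + m4 + m5 + mf -> lengths B n.
Proof.
move=> BP hz h0 h1 h2 h3 h4 h5 hf hn.
set F := nseq y [:: z] ++ nseq u Ua ++ nseq a Aa ++ nseq c Ca ++
  nseq m0 [:: e0; e0] ++ nseq m1 [:: e1; e1] ++ nseq m2 [:: e2; e2] ++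
  nseq m3 [:: e3; e3] ++ nseq m4 [:: e4; e4] ++ nseq m5 [:: e5; e5] ++ nseq mf [:: f; f].
have FT : forall A, A \in F -> A \in Tlist.
  move=> A; rewrite /F /Tlist !mem_cat !mem_nseq !inE.
  by do 10!(case/orP; [by case/andP=> _ ->; rewrite ?orbT|]); case/andP=> _ ->; rewrite ?orbT.
exists F; split; first by rewrite /F !size_cat !size_nseq hn; lia.
split; first by move=> A /FT /Tlist_ok [].
apply: perm_counts => //.
  move=> x /flattenP [A /FT /Tlist_ok [_ AP]]; exact: AP.
apply: P8_ind; rewrite ?hz ?h0 ?h1 ?h2 ?h3 ?h4 ?h5 ?hf /F !flatten_cat !count_cat !count_fnseq;
  letters; lia.
Qed.

Lemma lengths_zs (B : seq (C2 5)) n : lengths B n -> zero_sum B.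
Proof.
move=> [F [_ [HA hp]]].
have hp' : perm_eq (flatten F) B by rewrite perm_sym.
apply: zs_perm hp' _.
elim: F HA {hp} => [|A F IH] HA; first by rewrite /zero_sum big_nil.
rewrite /zero_sum /= sum_cat.
have [_ [zA _]] := HA A (mem_head _ _).
rewrite zA add0r; apply: IH => A' A'F; apply: HA; by rewrite inE A'F orbT.
Qed.

Definition Bk (y k n1 : nat) : seq (C2 5) :=
  nseq y z ++ nseq (2 * k + 2) e0 ++ nseq n1 e1 ++ nseq n1 e2 ++
  nseq (2 * k + 2) e3 ++ nseq (2 * k + 2) e4 ++ nseq (2 * k + 2) e5 ++ nseq 2 f.

Lemma Bk_info y k n1 :
  [/\ {subset Bk y k n1 <= P8}, size (Bk y k n1) = y + 4 * (2 * k + 2) + 2 * n1 + 2,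
   count_mem z (Bk y k n1) = y,
   [/\ count_mem e0 (Bk y k n1) = 2 * k + 2, count_mem e1 (Bk y k n1) = n1,
       count_mem e2 (Bk y k n1) = n1, count_mem e3 (Bk y k n1) = 2 * k + 2 &
       count_mem e4 (Bk y k n1) = 2 * k + 2] &
   count_mem e5 (Bk y k n1) = 2 * k + 2 /\ count_mem f (Bk y k n1) = 2].
Proof.
split.
- by apply/allP; rewrite /Bk !all_cat !all_nseq; inP8.
- by rewrite /Bk !size_cat !size_nseq; lia.
- by rewrite /Bk !count_cat !count_nseq; letters; lia.
- by split; rewrite /Bk !count_cat !count_nseq; letters; lia.
- by split; rewrite /Bk !count_cat !count_nseq; letters; lia.
Qed.

Lemma Bk_build y k n1 u a c m0 m1 mf n :
  2 * k + 2 = u + c + 2 * m0 -> n1 = u + a + 2 * m1 -> 2 = a + c + 2 * mf ->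
  n = y + u + a + c + 4 * m0 + 2 * m1 + mf -> lengths (Bk y k n1) n.
Proof.
move=> h0 h1 hf hn.
have [BP _ hz [c0 c1 c2 c3 c4] [c5 cf]] := Bk_info y k n1.
apply: (build (u := u) (a := a) (c := c) (m0 := m0) (m1 := m1) (m2 := m1) (m3 := m0)
  (m4 := m0) (m5 := m0) (mf := mf) BP hz); rewrite ?c0 ?c1 ?c2 ?c3 ?c4 ?c5 ?cf; lia.
Qed.

Lemma Bk_analyze y k n1 n : lengths (Bk y k n1) n ->
  exists u a c m0 m1 mf,
    2 * n + 4 * u + a + 3 * c = 2 * y + 4 * (2 * k + 2) + 2 * n1 + 2 /\
    2 * k + 2 = u + c + 2 * m0 /\ n1 = u + a + 2 * m1 /\ 2 = a + c + 2 * mf.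
Proof.
move=> hl.
have [BP hs hz [c0 c1 c2 c3 c4] [c5 cf]] := Bk_info y k n1.
have [u [a [c [m0 [m1 [mf [e1' [e2' [e3' e4']]]]]]]]] := analyze hl BP.
exists u, a, c, m0, m1, mf; rewrite c0 in e2'; rewrite c1 in e3'; rewrite cf in e4';
rewrite hs hz in e1'; split; [lia|split; [lia|split; lia]].
Qed.

Theorem lemma3p8 (y k : nat) :
  in_system_of_sets (C2 5) (shifted_set y k [:: 3; 4; 6; 7]%N) /\
  in_system_of_sets (C2 5) (shifted_set y k [:: 4; 5; 6; 8; 9]%N).
Proof.
split.
- exists (Bk y k (2 * k + 2)); split.
    apply: (@lengths_zs _ (y + 6 * k + 7)).
    by apply: (@Bk_build _ _ _ 0 0 0 (k + 1) (k + 1) 1); lia.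
  move=> n; split.
    move=> [s [i [hs [hi ->]]]].
    move: hs; rewrite !inE => /orP[/eqP->|/orP[/eqP->|/orP[/eqP->|/eqP->]]].
    + by apply: (@Bk_build _ _ _ (2 * (k - i) + 1) 1 1 i i 0); lia.
    + by apply: (@Bk_build _ _ _ (2 * (k - i)) 0 2 i (i + 1) 0); lia.
    + by apply: (@Bk_build _ _ _ (2 * (k - i)) 2 0 (i + 1) i 0); lia.
    + by apply: (@Bk_build _ _ _ (2 * (k - i)) 0 0 (i + 1) (i + 1) 1); lia.
  move/Bk_analyze => [u [a [c [m0 [m1 [mf [h1 [h2 [h3 h4]]]]]]]]].
  have [hmf|[[ha hc]|[[ha hc]|[ha hc]]]] :
    (mf = 1 /\ a = 0 /\ c = 0) \/ (a = 1 /\ c = 1) \/ (a = 2 /\ c = 0) \/ (a = 0 /\ c = 2)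
    by lia.
  + case: m0 h2 => [|m0] h2.
      by exists 3, 0; rewrite !inE; split=> //; split; lia.
    by exists 7, m0; rewrite !inE; split=> //; split; lia.
  + by exists 3, m0; rewrite !inE; split=> //; split; lia.
  + case: m0 h2 => [|m0] h2; first lia.
    by exists 6, m0; rewrite !inE; split=> //; split; lia.
  + by exists 4, m0; rewrite !inE; split=> //; split; lia.
- exists (Bk y k (2 * k + 4)); split.
    apply: (@lengths_zs _ (y + 6 * k + 9)).
    by apply: (@Bk_build _ _ _ 0 0 0 (k + 1) (k + 2) 1); lia.
  move=> n; split.
    move=> [s [i [hs [hi ->]]]].
    move: hs; rewrite !inE => /orP[/eqP->|/orP[/eqP->|/orP[/eqP->|/orP[/eqP->|/eqP->]]]].
    + by apply: (@Bk_build _ _ _ (2 * (k + 1 - i)) 2 0 i i 0); lia.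
    + by apply: (@Bk_build _ _ _ (2 * (k - i) + 1) 1 1 i (i + 1) 0); lia.
    + by apply: (@Bk_build _ _ _ (2 * (k - i)) 0 2 i (i + 2) 0); lia.
    + by apply: (@Bk_build _ _ _ (2 * (k - i)) 2 0 (i + 1) (i + 1) 0); lia.
    + by apply: (@Bk_build _ _ _ (2 * (k - i)) 0 0 (i + 1) (i + 2) 1); lia.
  move/Bk_analyze => [u [a [c [m0 [m1 [mf [h1 [h2 [h3 h4]]]]]]]]].
  have [hmf|[[ha hc]|[[ha hc]|[ha hc]]]] :
    (mf = 1 /\ a = 0 /\ c = 0) \/ (a = 1 /\ c = 1) \/ (a = 2 /\ c = 0) \/ (a = 0 /\ c = 2)
    by lia.
  + case: m0 h2 => [|m0] h2.
      by exists 5, 0; rewrite !inE; split=> //; split; lia.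
    by exists 9, m0; rewrite !inE; split=> //; split; lia.
  + by exists 5, m0; rewrite !inE; split=> //; split; lia.
  + case: m0 h2 => [|m0] h2.
      by exists 4, 0; rewrite !inE; split=> //; split; lia.
    by exists 8, m0; rewrite !inE; split=> //; split; lia.
  + by exists 6, m0; rewrite !inE; split=> //; split; lia.
Qed.
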